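(* Let $\Lambda$ be the path algebra over $k$ of a quiver of type $A_t$ with linear orientation, and let $B$ be its indecomposable projective-injective module. Suppose $B_1\to B_2\to\cdots\to B_s\to B\to C_1\to\cdots\to C_{t-s}$ is a sequence of irreducible maps between indecomposable $\Lambda$-modules, where $t>s>0$. Then every tilting $\Lambda$-module $T$ has one of the $B_i$ ($1\leq i\leq s$) or $C_j$ ($1\leq j\leq t-s$) as an indecomposable direct summand.
   Context: A tilting module over a hereditary algebra with $t$ simple modules is a basic module $T$ with $\operatorname{Ext}^1(T,T)=0$ and $t$ non-isomorphic indecomposable summands. *)

(* Defs.v *)
(* Finite-dimensional representations of the linearly
   oriented quiver A_t : 0 -> 1 -> ... -> t-1 over a field k
   (= finite-dimensional modules over its path algebra).
   Linear maps act on row vectors (MathComp convention): a map V -> W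
   between spaces of dimensions m, n is a matrix 'M_(m, n), and composition
   "first f then g" is f *m g. *)
From HB Require Import structures.
From mathcomp Require Import all_boot all_order all_algebra.
Set Implicit Arguments. Unset Strict Implicit. Unset Printing Implicit Defensive.
Import GRing.Theory.
Local Open Scope ring_scope.

Definition arr (t : nat) := {p : 'I_t * 'I_t | (p.2 : nat) == (p.1).+1}.
Definition asrc t (a : arr t) : 'I_t := (val a).1.
Definition atgt t (a : arr t) : 'I_t := (val a).2.

Record rep (k : fieldType) (t : nat) := Rep {
  rdim : 'I_t -> nat ;
  rmap : forall a : arr t, 'M[k]_(rdim (asrc a), rdim (atgt a)) }.

Section Reps.
Variables (k : fieldType) (t : nat).
Implicit Types M N P X Y Z : rep k t.

Definition homfam M N := forall i : 'I_t, 'M[k]_(rdim M i, rdim N i).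

Definition is_hom M N (f : homfam M N) : Prop :=
  forall a : arr t, rmap M a *m f (atgt a) = f (asrc a) *m rmap N a.

Definition hcomp M N P (f : homfam M N) (g : homfam N P) : homfam M P :=
  fun i => f i *m g i.
Definition hid M : homfam M M := fun i => 1%:M.
Definition hzero M N : homfam M N := fun i => 0.

Definition heq M N (f g : homfam M N) : Prop := forall i, f i = g i.

Definition is_iso M N : Prop :=
  exists (f : homfam M N) (g : homfam N M), [/\ is_hom f, is_hom g,
    heq (hcomp f g) (hid M) & heq (hcomp g f) (hid N)].

Definition is_zero_rep M : Prop := forall i, rdim M i = 0%N.

Definition is_biproduct M X Y : Prop :=
  exists (iX : homfam X M) (pX : homfam M X) (iY : homfam Y M) (pY : homfam M Y),
    [/\ is_hom iX, is_hom pX, is_hom iY & is_hom pY] /\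
    [/\ heq (hcomp iX pX) (hid X), heq (hcomp iY pY) (hid Y),
        heq (hcomp iX pY) (hzero X Y), heq (hcomp iY pX) (hzero Y X) &
        forall i, pX i *m iX i + pY i *m iY i = 1%:M].

Definition indecomposable M : Prop :=
  ~ is_zero_rep M /\
  forall X Y, is_biproduct M X Y -> is_zero_rep X \/ is_zero_rep Y.

Definition is_summand X M : Prop :=
  exists (s : homfam X M) (r : homfam M X),
    [/\ is_hom s, is_hom r & heq (hcomp s r) (hid X)].

Definition split_mono X Y (f : homfam X Y) : Prop :=
  exists r : homfam Y X, is_hom r /\ heq (hcomp f r) (hid X).
Definition split_epi X Y (g : homfam X Y) : Prop :=
  exists s : homfam Y X, is_hom s /\ heq (hcomp s g) (hid Y).

Definition irreducible_map X Y (f : homfam X Y) : Prop :=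
  [/\ is_hom f, ~ split_mono f, ~ split_epi f &
      forall Z (g : homfam X Z) (h : homfam Z Y), is_hom g -> is_hom h ->
        heq (hcomp g h) f -> split_mono g \/ split_epi h].

Definition is_mono X Y (f : homfam X Y) : Prop :=
  is_hom f /\ forall i, row_free (f i).
Definition is_epi X Y (f : homfam X Y) : Prop :=
  is_hom f /\ forall i, row_full (f i).

Definition projective_rep P : Prop :=
  forall X Y (g : homfam X Y) (f : homfam P Y), is_epi g -> is_hom f ->
    exists h : homfam P X, is_hom h /\ heq (hcomp h g) f.
Definition injective_rep I : Prop :=
  forall X Y (g : homfam X Y) (f : homfam X I), is_mono g -> is_hom f ->
    exists h : homfam Y I, is_hom h /\ heq (hcomp g h) f.

(* Ext^1(M, N) = 0 (Yoneda): every short exact sequence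
   0 -> N -> E -> M -> 0 splits. *)
Definition ext1_vanishes M N : Prop :=
  forall E (f : homfam N E) (g : homfam E M),
    is_mono f -> is_epi g ->
    (forall i, f i *m g i = 0 /\ (kermx (g i) <= f i)%MS) ->
    split_epi g.

(* basic tilting module: Ext^1(T,T) = 0 and T is the direct sum of t pairwise
   non-isomorphic indecomposable modules (t = number of simple modules) *)
Definition tilting T : Prop :=
  ext1_vanishes T T /\
  exists (X : 'I_t -> rep k t) (s : forall j, homfam (X j) T)
         (r : forall j, homfam T (X j)),
    [/\ forall j, indecomposable (X j),
        forall j l, j != l -> ~ is_iso (X j) (X l) &
        forall j, is_hom (s j) /\ is_hom (r j)] /\
    [/\
        forall j, heq (hcomp (s j) (r j)) (hid (X j)),
        forall j l, j != l -> heq (hcomp (s j) (r l)) (hzero (X j) (X l)) &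
        forall i, \sum_j (r j i *m s j i) = 1%:M].

End Reps.

(* Main.v *)
Require Import Defs.
From mathcomp Require Import all_boot all_order all_algebra.
From mathcomp Require Import zify.
From Stdlib Require Import Classical.
Set Implicit Arguments. Unset Strict Implicit. Unset Printing Implicit Defensive.
Import GRing.Theory.

Section Comb.
Variable (t : nat).
Variable F : option 'I_t -> nat * nat.
Hypothesis Fv : forall x, ((F x).1 <= (F x).2 < t).
Hypothesis Finj : injective F.
Hypothesis Fnc : forall x y, ~ [/\ (F x).1 < (F y).1, (F y).1 <= (F x).2.+1 & (F x).2.+1 <= (F y).2].

Definition Q x m := [&& (F x).1 < m, m < (F x).2 + 2 &
  (m == (F x).1.+1) || [exists y, F y == ((F x).1, m - 2)]].

Lemma phi_ex x : exists m, Q x m /\ forall m', Q x m' -> m' <= m.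
Proof.
have ex : exists m, Q x m.
  exists (F x).1.+1; rewrite /Q eqxx orTb andbT ltnSn /=.
  by have := Fv x; lia.
have ub : forall m, Q x m -> m <= (F x).2 + 2 by move=> m /and3P[_ h _]; lia.
by case: (ex_maxnP ex ub) => m Qm hm; exists m.
Qed.

Lemma Qcross x y m : Q x m -> Q y m -> (F x).1 < (F y).1 -> False.
Proof.
move=> /and3P[h1 h2 h3] /and3P[h1' h2' h3'] hlt.
have : m != (F x).1.+1 by apply/eqP; lia.
move/negbTE => E; rewrite E /= in h3.
case/existsP: h3 => z /eqP Fz.
have := @Fnc z y; rewrite Fz /=; apply; split; lia.
Qed.

Lemma Qsame x y m : Q x m -> (forall m', Q y m' -> m' <= m) -> (F x).1 = (F y).1 ->
  (F x).2 < (F y).2 -> False.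
Proof.
move=> /and3P[h1 h2 h3] hmax ha hc.
have : Q y ((F x).2 + 2).
  rewrite /Q; apply/and3P; split; first by have := Fv x; lia.
    by lia.
  apply/orP; right; apply/existsP; exists x; rewrite -ha.
  by rewrite addnK -surjective_pairing.
move/hmax; lia.
Qed.

Lemma comb_false : False.
Proof.
have [phi hphi] := fin_all_exists phi_ex.
have inj : injective phi.
  move=> x y e.
  have [Qx mx] := hphi x; have [Qy my] := hphi y.
  rewrite -e in Qy my.
  case: (eqVneq x y) => // nxy; exfalso.
  case: (ltngtP (F x).1 (F y).1) => ha.
  - exact: Qcross Qx Qy ha.
  - exact: Qcross Qy Qx ha.
  have nF : F x != F y by apply: contra_neq nxy; apply: Finj.
  have hc : (F x).2 != (F y).2.
    apply: contra_neq nF => hc; move: ha hc; case: (F x) => ??; case: (F y) => ?? /= -> -> //.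
  case: (ltngtP (F x).2 (F y).2) hc => // hc _.
  - exact: Qsame Qx my ha hc.
  - exact: Qsame Qy mx (esym ha) hc.
have rng x : 0 < phi x <= t.
  have [/and3P[h1 h2 _] _] := hphi x; have := Fv x; lia.
have H x : (phi x).-1 < t by have := rng x; lia.
pose psi (x : option 'I_t) : 'I_t := Ordinal (H x).
have psi_inj : injective psi.
  move=> x y /(congr1 val) /= e.
  by apply: inj; have := rng x; have := rng y; lia.
have := leq_card psi psi_inj; rewrite card_option card_ord; lia.
Qed.

End Comb.

Local Open Scope ring_scope.


Section Basic.
Variables (k : fieldType) (t' : nat).
Local Notation t := t'.+1.
Implicit Types X Y Z : rep k t.

Lemma mx_eq0r m n (A : 'M[k]_(m, n)) : n = 0%N -> A = 0.
Proof. by move=> Hn; move: A; rewrite Hn => A; apply/matrixP=> p [? ?]. Qed.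
Lemma mx_eq0l m n (A : 'M[k]_(m, n)) : m = 0%N -> A = 0.
Proof. by move=> Hm; move: A; rewrite Hm => A; apply/matrixP=> [[? ?]]. Qed.

Definition nxt (i : 'I_t) : 'I_t := inord i.+1.
Definition prv (i : 'I_t) : 'I_t := inord i.-1.

Definition out X (i : 'I_t) : 'M[k]_(rdim X i, rdim X (nxt i)) :=
  match Sumbool.sumbool_of_bool ((nxt i : nat) == i.+1) with
  | left H => rmap X (exist _ (i, nxt i) H)
  | right _ => 0 end.

Definition inn X (i : 'I_t) : 'M[k]_(rdim X (prv i), rdim X i) :=
  match Sumbool.sumbool_of_bool ((i : nat) == (prv i).+1) with
  | left H => rmap X (exist _ (prv i, i) H)
  | right _ => 0 end.

Lemma nxtE (i : 'I_t) : (i.+1 < t)%N -> (nxt i : nat) = i.+1.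
Proof. by move=> h; rewrite /nxt inordK. Qed.

Lemma out_noarr X (i : 'I_t) : ~~ (i.+1 < t)%N -> out X i = 0.
Proof.
move=> h; rewrite /out; case: Sumbool.sumbool_of_bool => // H; exfalso.
by move/eqP: H h => <-; rewrite ltn_ord.
Qed.

Lemma rmap_out X (i : 'I_t) H : rmap X (exist _ (i, nxt i) H) = out X i.
Proof.
rewrite /out; case: Sumbool.sumbool_of_bool => H'; first by rewrite (bool_irrelevance H H').
by exfalso; move: H'; rewrite H.
Qed.

Lemma prv_nxt (i : 'I_t) : (i.+1 < t)%N -> prv (nxt i) = i.
Proof. by move=> h; apply: val_inj; rewrite /prv nxtE // /= inordK // ltnW. Qed.

Lemma inn_out X (F : forall j : 'I_t, 'M[k]_(1, rdim X j)) (i : 'I_t) :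
  (i.+1 < t)%N -> F (prv (nxt i)) *m inn X (nxt i) = F i *m out X i.
Proof.
move=> h; rewrite /inn /out.
case: Sumbool.sumbool_of_bool => H1; last by exfalso; move: H1; rewrite prv_nxt // nxtE // eqxx.
case: Sumbool.sumbool_of_bool => H2; last by exfalso; move: H2; rewrite nxtE // eqxx.
move: H1; rewrite prv_nxt // => H1.
by rewrite (bool_irrelevance H1 H2).
Qed.

Lemma homP X Y (f : homfam X Y) :
  is_hom f <-> forall i, out X i *m f (nxt i) = f i *m out Y i.
Proof.
split=> [hf i|hf [[i j] H]].
  rewrite /out; case: Sumbool.sumbool_of_bool => H; last by rewrite mul0mx mulmx0.
  exact: (hf (exist _ (i, nxt i) H)).
have E : j = nxt i.
  have Hj : (j : nat) = i.+1 by exact/eqP.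
  by apply: val_inj; rewrite /= nxtE // -Hj.
subst j; rewrite /is_hom /=.
by rewrite !rmap_out; apply: hf.
Qed.

End Basic.


Section Gen.
Variables (k : fieldType) (t : nat).
Implicit Types X Y Z I : rep k t.

Lemma hom_comp X Y Z (f : homfam X Y) (g : homfam Y Z) :
  is_hom f -> is_hom g -> is_hom (hcomp f g).
Proof. by move=> hf hg a; rewrite /hcomp mulmxA hf -!mulmxA hg. Qed.

Lemma hom_id X : is_hom (hid X).
Proof. by move=> a; rewrite /hid mulmx1 mul1mx. Qed.

Lemma hcompA X Y Z W (f : homfam X Y) (g : homfam Y Z) (h : homfam Z W) i :
  hcomp (hcomp f g) h i = hcomp f (hcomp g h) i.
Proof. by rewrite /hcomp mulmxA. Qed.

Lemma pY_aux m n r s (q1 : 'M[k]_m) (X : 'M[k]_(m,n)) (q2 : 'M[k]_n)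
  (B1 : 'M[k]_(r,m)) (B2 : 'M[k]_(s,n)) :
  X *m q2 = q1 *m X -> (q1 <= B1)%MS ->
  X *m (q2 *m pinvmx B2) = (q1 *m pinvmx B1) *m (B1 *m X *m pinvmx B2).
Proof.
move=> E H; rewrite mulmxA E.
rewrite (mulmxA (q1 *m pinvmx B1)) (mulmxA (q1 *m pinvmx B1) B1) mulmxKpV //.
Qed.

Lemma summand_iso I X : indecomposable X -> ~ is_zero_rep I -> is_summand I X ->
  is_iso I X.
Proof.
move=> [_ indX] nzI [sg [rh [hs hr sr]]].
have sr' i : sg i *m rh i = 1%:M := sr i.
pose e i := rh i *m sg i.
pose q i := 1%:M - e i.
have ee i : e i *m e i = e i by rewrite /e mulmxA -(mulmxA (rh i)) sr' mulmx1.
have qq i : q i *m q i = q i.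
  by rewrite /q mulmxBl mul1mx mulmxBr mulmx1 ee subrr subr0.
have qhom (a : arr t) : rmap X a *m q (atgt a) = q (asrc a) *m rmap X a.
  rewrite /q /e mulmxBr mulmxBl mulmx1 mul1mx; congr (_ - _).
  by rewrite mulmxA hr -mulmxA hs mulmxA.
pose B i := row_base (q i).
have Bq i : (B i <= q i)%MS by rewrite eq_row_base.
have qB i : (q i <= B i)%MS by rewrite eq_row_base.
have BqE i : B i *m q i = B i.
  by case/submxP: (Bq i) => D ->; rewrite -mulmxA qq.
have BV i : B i *m pinvmx (B i) = 1%:M by rewrite mulmxVp // row_base_free.
have BX (a : arr t) : (B (asrc a) *m rmap X a <= B (atgt a))%MS.
  rewrite -BqE -mulmxA -qhom mulmxA.
  exact: submx_trans (submxMl _ _) (qB _).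
pose Y := @Rep k t (fun i => \rank (q i))
  (fun a => B (asrc a) *m rmap X a *m pinvmx (B (atgt a))).
have sq i : sg i *m q i = 0.
  by rewrite /q /e mulmxBr mulmx1 mulmxA sr' mul1mx subrr.
have qr i : q i *m rh i = 0.
  by rewrite /q /e mulmxBl mul1mx -mulmxA sr' mulmx1 subrr.
have bp : is_biproduct X I Y.
  exists sg, rh, (B : homfam Y X), (fun i => q i *m pinvmx (B i)); split; first split => //.
  - by move=> a; rewrite /= mulmxKpV.
  - move=> a; have -> : rmap Y a = B (asrc a) *m rmap X a *m pinvmx (B (atgt a)) by [].
    exact: pY_aux (qhom a) (qB _).
  split=> i.
  - exact: sr.
  - by rewrite /hcomp mulmxA BqE BV.
  - by rewrite /hcomp mulmxA sq mul0mx.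
  - by rewrite /hcomp -BqE -mulmxA qr mulmx0.
  - rewrite mulmxKpV // /q /e; exact: subrKC.
case: (indX _ _ bp) => [//|zY].
have q0 i : q i = 0 by apply/eqP; rewrite -mxrank_eq0; apply/eqP; exact: zY i.
exists sg, rh; split=> // i; rewrite /hcomp /hid.
by move/eqP: (q0 i); rewrite /q /e subr_eq0 => /eqP E; rewrite -E.
Qed.

End Gen.


Section Scal.
Variable (k : fieldType).
Definition sc m n (A : 'M[k]_(m, n)) : k := \sum_p \sum_q A p q.

Lemma sc_mulb (b1 b2 b3 : bool) (A : 'M[k]_(b1, b2)) (B : 'M[k]_(b2, b3)) :
  sc (A *m B) = if b2 then sc A * sc B else 0.
Proof.
rewrite /sc; case: b1 A B; case: b2; case: b3 => A B /=;
  rewrite ?big_ord1 ?big_ord0 // ?mxE ?big_ord1 ?big_ord0 ?mulr0 ?mul0r //.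
Qed.

Lemma sc_inj (b1 b2 : bool) (A B : 'M[k]_(b1, b2)) : sc A = sc B -> A = B.
Proof.
rewrite /sc; case: b1 A B; case: b2 => A B /=; rewrite ?big_ord1 ?big_ord0 => E;
  apply/matrixP => p q; rewrite ?ord1; try by case: p; try by case: q.
Qed.

Lemma sc_const (b1 b2 : bool) (c : k) : sc (const_mx c : 'M[k]_(b1, b2)) = if b1 && b2 then c else 0.
Proof. by rewrite /sc; case: b1; case: b2; rewrite /= ?big_ord1 ?big_ord0 ?mxE. Qed.

Lemma sc1 (b : bool) : sc (1%:M : 'M[k]_b) = if b then 1 else 0.
Proof. by rewrite /sc; case: b; rewrite /= ?big_ord1 ?big_ord0 ?mxE. Qed.

Lemma sc0 m n : sc (0 : 'M[k]_(m, n)) = 0.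
Proof. by rewrite /sc big1 // => p _; rewrite big1 // => q _; rewrite mxE. Qed.

Lemma scD m n (A B : 'M[k]_(m, n)) : sc (A + B) = sc A + sc B.
Proof. by rewrite /sc -big_split; apply: eq_bigr => p _; rewrite -big_split; apply: eq_bigr => q _; rewrite mxE. Qed.

Lemma scN m n (A : 'M[k]_(m, n)) : sc (- A) = - sc A.
Proof. by rewrite /sc -sumrN; apply: eq_bigr => p _; rewrite -sumrN; apply: eq_bigr => q _; rewrite mxE. Qed.

Lemma scB m n (A B : 'M[k]_(m, n)) : sc (A - B) = sc A - sc B.
Proof. by rewrite scD scN. Qed.

Lemma scZ m n c (A : 'M[k]_(m, n)) : sc (c *: A) = c * sc A.
Proof. by rewrite /sc mulr_sumr; apply: eq_bigr => p _; rewrite mulr_sumr; apply: eq_bigr => q _; rewrite mxE. Qed.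

Lemma sc_l0 n (A : 'M[k]_(0, n)) : sc A = 0.
Proof. by rewrite /sc big_ord0. Qed.
Lemma sc_r0 m (A : 'M[k]_(m, 0)) : sc A = 0.
Proof. by rewrite /sc big1 // => p _; rewrite big_ord0. Qed.

End Scal.


Section Intervals.
Variables (k : fieldType) (t' : nat).
Local Notation t := t'.+1.

Definition inI (a c n : nat) : bool := (a <= n)%N && (n <= c)%N.

Definition Irep (a c : nat) : rep k t :=
  @Rep k t (fun i => nat_of_bool (inI a c i)) (fun _ => const_mx 1).

Lemma nxt_inord n : (n.+1 < t)%N -> nxt (inord n : 'I_t) = inord n.+1.
Proof. by move=> h; apply: val_inj; rewrite /= nxtE /= !inordK // ltnW. Qed.

Lemma out_I a c (i : 'I_t) : (i.+1 < t)%N -> out (Irep a c) i = const_mx 1.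
Proof.
move=> h; rewrite /out; case: Sumbool.sumbool_of_bool => // H.
by exfalso; move: H; rewrite nxtE // eqxx.
Qed.

Definition G a b c d (g : homfam (Irep a b) (Irep c d)) (n : nat) : k :=
  sc (g (inord n)).

Lemma G0 a b c d (g : homfam (Irep a b) (Irep c d)) n :
  ~~ (inI a b n && inI c d n) -> (n < t)%N -> G g n = 0.
Proof.
move=> h ht; rewrite /G; move: (g (inord n)); rewrite /= inordK //.
by move: h; case: (inI a b n); case: (inI c d n) => /= hh A; rewrite ?sc_l0 ?sc_r0.
Qed.

Lemma homI a b c d (g : homfam (Irep a b) (Irep c d)) :
  is_hom g <-> forall n, (n.+1 < t)%N ->
    (if inI a b n && inI a b n.+1 then G g n.+1 else 0) =
    (if inI c d n && inI c d n.+1 then G g n else 0).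
Proof.
split=> [/homP hg n hn|hg].
  have := congr1 (@sc _ _ _) (hg (inord n)).
  rewrite !out_I ?inordK ?(ltnW hn) //.
  rewrite !sc_mulb !sc_const nxt_inord // -/(G g n) -/(G g n.+1) /= !inordK ?(ltnW hn) //.
  case: (inI a b n); case: (inI a b n.+1); case: (inI c d n); case: (inI c d n.+1);
    by rewrite /= ?mul1r ?mulr1 ?mul0r ?mulr0.
apply/homP => i.
case: (ltnP i.+1 t) => hi; last by rewrite !out_noarr -?ltnNge // mul0mx mulmx0.
apply: sc_inj; rewrite !out_I // !sc_mulb !sc_const.
set S1 := sc (g (nxt i)); set S0 := sc (g i).
have := hg _ hi; rewrite /G -/(nxt i) inord_val -/S1 -/S0 /= nxtE //.
case: (inI a b i); case: (inI a b i.+1); case: (inI c d i); case: (inI c d i.+1);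
  by rewrite /= ?mul1r ?mulr1 ?mul0r ?mulr0.
Qed.

Lemma G_comp a b c d e f (g : homfam (Irep a b) (Irep c d)) (h : homfam (Irep c d) (Irep e f)) n :
  (n < t)%N -> G (hcomp g h) n = if inI c d n then G g n * G h n else 0.
Proof. by move=> hn; rewrite /G /hcomp sc_mulb -/(G g n) -/(G h n) /= inordK. Qed.

Lemma G_id a b n : (n < t)%N -> G (hid (Irep a b)) n = if inI a b n then 1 else 0.
Proof. by move=> hn; rewrite /G /hid sc1 /= inordK. Qed.

Lemma G_inj a b c d (g h : homfam (Irep a b) (Irep c d)) :
  (forall n, (n < t)%N -> G g n = G h n) -> forall i, g i = h i.
Proof. move=> E i; apply: sc_inj; have := E i (ltn_ord i); by rewrite /G inord_val. Qed.

End Intervals.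


Section Classify.
Variables (k : fieldType) (t' : nat).
Local Notation t := t'.+1.

Lemma mul_mid0 m n p (A : 'M[k]_(m, n)) (B : 'M[k]_(n, p)) : n = 0%N -> A *m B = 0.
Proof. by move=> h; rewrite (mx_eq0r A h) mul0mx. Qed.

Lemma eq_dim0r m n (A B : 'M[k]_(m, n)) : n = 0%N -> A = B.
Proof. by move=> h; rewrite (mx_eq0r A h) (mx_eq0r B h). Qed.
Lemma eq_dim0l m n (A B : 'M[k]_(m, n)) : m = 0%N -> A = B.
Proof. by move=> h; rewrite (mx_eq0l A h) (mx_eq0l B h). Qed.

Lemma const11 (b1 b2 : bool) : b1 ->
  (const_mx 1 : 'M[k]_(1, b1)) *m (const_mx 1 : 'M[k]_(b1, b2)) = const_mx 1.
Proof.
by case: b1 => // _; apply/matrixP => p q; rewrite !mxE big_ord1 !mxE mulr1.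
Qed.
Lemma const1c (b1 b2 : bool) : b2 ->
  (const_mx 1 : 'M[k]_(b1, b2)) *m (const_mx 1 : 'M[k]_(b2, 1)) = const_mx 1.
Proof.
by case: b2 => // _; apply/matrixP => p q; rewrite !mxE big_ord1 !mxE mulr1.
Qed.

Lemma const_sand (b : bool) m (u : 'M[k]_(1, m)) (w : 'M[k]_(m, 1)) :
  (b -> u *m w = 1%:M) ->
  ((const_mx 1 : 'M[k]_(b, 1)) *m u) *m (w *m (const_mx 1 : 'M[k]_(1, b))) = 1%:M.
Proof.
case: b => [h|_]; last by apply/matrixP => [[]].
rewrite mulmxA -(mulmxA _ u) h ?mulmx1 //.
by apply/matrixP => p q; rewrite !ord1 !mxE big_ord1 !mxE mulr1.
Qed.

Section Fix.
Variables (X : rep k t) (c : 'I_t).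
Hypothesis Xc : (0 < rdim X c)%N.
Hypothesis Xmax : forall i : 'I_t, (c < i)%N -> rdim X i = 0%N.

Fixpoint rhoF (n : nat) (i : 'I_t) : 'cV[k]_(rdim X i) :=
  match n with 0 => const_mx 1 | n'.+1 => out X i *m rhoF n' (nxt i) end.
Definition rho (i : 'I_t) := rhoF (c - i) i.

Lemma rho_step (i : 'I_t) : (i < c)%N -> rho i = out X i *m rho (nxt i).
Proof.
move=> h; have ht : (i.+1 < t)%N by apply: leq_ltn_trans h _.
have E : (c - i = (c - i.+1).+1)%N by rewrite subnS prednK // subn_gt0.
by rewrite /rho nxtE // E.
Qed.

Lemma rho_c : rho c != 0.
Proof.
rewrite /rho subnn /=; apply/eqP => /matrixP /(_ (Ordinal Xc) ord0).
by rewrite !mxE; apply/eqP; apply: oner_neq0.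
Qed.

Let P n := (n <= c)%N && (rho (inord n) != 0).
Let exP : exists n, P n.
Proof. by exists c; rewrite /P leqnn inord_val rho_c. Qed.

Definition amin := ex_minn exP.

Lemma amin_le : (amin <= c)%N.
Proof. by rewrite /amin; case: ex_minnP => n /andP[]. Qed.
Lemma amin_nz : rho (inord amin) != 0.
Proof. by rewrite /amin; case: ex_minnP => n /andP[]. Qed.
Lemma amin_min n : (n < amin)%N -> rho (inord n) = 0.
Proof.
rewrite /amin; case: ex_minnP => m /andP[hm _] hmin hn.
apply/eqP; have := hn; apply: contraTT => hnz; rewrite -leqNgt; apply: hmin.
by rewrite /P hnz andbT (leq_trans (ltnW hn)).
Qed.

Local Notation a := amin.

Fixpoint vF (n : nat) (i : 'I_t) : 'rV[k]_(rdim X i) :=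
  match n with 0 => pinvmx (rho i) | n'.+1 => vF n' (prv i) *m inn X i end.
Definition v (i : 'I_t) := vF (i - a) i.

Lemma v_step (i : 'I_t) : (a <= i)%N -> (i.+1 < t)%N -> v (nxt i) = v i *m out X i.
Proof.
move=> ha ht; rewrite /v nxtE // subSn //=.
exact: (inn_out (fun j => vF (i - a) j)).
Qed.

Lemma rank_col1 m (A : 'cV[k]_m) : A != 0 -> row_full A.
Proof.
move=> h; rewrite /row_full eqn_leq rank_leq_col lt0n mxrank_eq0 //.
Qed.

Lemma vrho n : (a <= n <= c)%N -> v (inord n) *m rho (inord n) = 1%:M.
Proof.
move=> /andP[]; elim: n => [|n IH] han hnc.
  have a0 : a = 0%N by apply/eqP; rewrite -leqn0.
  rewrite /v inordK // a0 /= mulVpmx //.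
  by apply: rank_col1; have := amin_nz; rewrite a0.
case: (ltngtP a n.+1) han => // [hlt _|<- _].
  have hnt : (n.+1 < t)%N by apply: leq_ltn_trans hnc _.
  have hn : (n < c)%N by [].
  rewrite -nxt_inord // v_step ?inordK ?(ltnW hnt) //.
  have R : rho (inord n) = out X (inord n) *m rho (nxt (inord n)).
    by apply: rho_step; rewrite inordK // ltnW.
  by rewrite -mulmxA -R IH // ltnW.
have hat : (a < t)%N by exact: leq_ltn_trans amin_le (ltn_ord c).
rewrite /v inordK // subnn /=.
by rewrite mulVpmx //; apply: rank_col1; apply: amin_nz.
Qed.

Definition rI : homfam X (Irep k t' a c) := fun i => rho i *m const_mx 1.
Definition sI : homfam (Irep k t' a c) X := fun i => const_mx 1 *m v i.

Lemma rI_hom : is_hom rI.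
Proof.
apply/homP => i.
case: (ltnP i.+1 t) => ht; last by rewrite !out_noarr -?ltnNge // mul0mx mulmx0.
rewrite out_I // /rI.
case hn: (inI a c (nxt i)); last by apply: eq_dim0r; rewrite /= hn.
have hic : (i < c)%N by move: hn; rewrite /inI nxtE // => /andP[].
rewrite mulmxA -rho_step // -mulmxA.
case hi: (inI a c i); first by rewrite const11 ?hi.
have hia : (i < a)%N.
  by move: hi; rewrite /inI (ltnW hic) andbT ltnNge => ->.
by rewrite -(inord_val i) amin_min // !mul0mx.
Qed.

Lemma sI_hom : is_hom sI.
Proof.
apply/homP => i.
case: (ltnP i.+1 t) => ht; last by rewrite !out_noarr -?ltnNge // mul0mx mulmx0.
rewrite out_I // /sI.
case hi: (inI a c i); last by apply: eq_dim0l; rewrite /= hi.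
case: (ltnP i c) => hic; last first.
  by apply: eq_dim0r; apply: Xmax; rewrite nxtE // ltnS.
have hn : inI a c (nxt i).
  by move: hi; rewrite /inI nxtE // => /andP[h1 _]; rewrite hic (leq_trans h1).
rewrite v_step //; last by move: hi => /andP[].
by rewrite !mulmxA const1c.
Qed.

Lemma sr_id i : (sI i *m rI i) = 1%:M.
Proof.
rewrite /sI /rI; apply: const_sand => hi.
by have := vrho hi; rewrite inord_val.
Qed.

End Fix.

Lemma classify (X : rep k t) : indecomposable X ->
  exists a c, (a <= c < t)%N /\ is_iso (Irep k t' a c) X.
Proof.
move=> indX; have nz := indX.1.
have [i0 hi0] : exists i : 'I_t, (0 < rdim X i)%N.
  case: (boolP [exists i : 'I_t, 0 < rdim X i]%N) => [/existsP//|/existsPn h].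
  by exfalso; apply: nz => i; move: (h i); rewrite lt0n negbK => /eqP.
pose P n := (n < t)%N && (0 < rdim X (inord n))%N.
have exP : exists n, P n by exists i0; rewrite /P ltn_ord inord_val.
have ubP : forall n, P n -> (n <= t')%N by move=> n /andP[].
case: (ex_maxnP exP ubP) => cn /andP[hcn Pcn] hmax.
pose c : 'I_t := inord cn.
have Xc : (0 < rdim X c)%N by [].
have Xmax : forall i : 'I_t, (c < i)%N -> rdim X i = 0%N.
  move=> i hi; apply/eqP; rewrite -leqn0 leqNgt; apply/negP => hp.
  have := hmax i; rewrite /P ltn_ord inord_val hp => /(_ isT).
  by move: hi; rewrite /c inordK // => /leq_trans h /h; rewrite ltnn.
exists (amin Xc), c; split.
  by rewrite (amin_le Xc) ltn_ord.
apply: summand_iso => //.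
  by move/(_ c) => /=; rewrite /inI (amin_le Xc) leqnn.
exists (sI Xc), (rI Xc); split; [exact: sI_hom | exact: rI_hom |].
by move=> i; apply: sr_id.
Qed.

End Classify.


Section IsoAlg.
Variables (k : fieldType) (t : nat).
Implicit Types X Y Z : rep k t.

Lemma iso_sym X Y : is_iso X Y -> is_iso Y X.
Proof. by case=> f [g [hf hg fg gf]]; exists g, f. Qed.

Lemma iso_trans X Y Z : is_iso X Y -> is_iso Y Z -> is_iso X Z.
Proof.
case=> f [g [hf hg fg gf]] [f' [g' [hf' hg' fg' gf']]].
exists (hcomp f f'), (hcomp g' g); split; try exact: hom_comp.
  move=> i; rewrite /hcomp -(mulmxA (f i)) (mulmxA (f' i)).
  by have := fg' i; rewrite /hcomp /hid => ->; rewrite mul1mx; apply: fg.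
move=> i; rewrite /hcomp -(mulmxA (g' i)) (mulmxA (g i)).
by have := gf i; rewrite /hcomp /hid => ->; rewrite mul1mx; apply: gf'.
Qed.

Lemma iso_summand X Y Z : is_iso X Y -> is_summand Y Z -> is_summand X Z.
Proof.
case=> f [g [hf hg fg gf]] [s [r [hs hr sr]]].
exists (hcomp f s), (hcomp r g); split; try exact: hom_comp.
move=> i; rewrite /hcomp -(mulmxA (f i)) (mulmxA (s i)).
by have := sr i; rewrite /hcomp /hid => ->; rewrite mul1mx; apply: fg.
Qed.

End IsoAlg.

Section IntA.
Variables (k : fieldType) (t' : nat).
Local Notation t := t'.+1.
Local Notation I := (Irep k t').

Definition cI a b c d : homfam (I a b) (I c d) := fun i => const_mx 1.

Lemma G_cI a b c d n : (n < t)%N -> G (cI a b c d) n = if inI a b n && inI c d n then 1 else 0.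
Proof. by move=> h; rewrite /G /cI sc_const /= inordK. Qed.

Lemma cI_hom a b c d :
  (forall n, (n.+1 < t)%N -> (inI a b n && inI a b n.+1 && inI c d n.+1) =
                           (inI a b n && inI c d n && inI c d n.+1)) ->
  is_hom (cI a b c d).
Proof.
move=> h; apply/homI => n hn; rewrite !G_cI ?(ltnW hn) //.
have := h n hn.
by case: (inI a b n); case: (inI a b n.+1); case: (inI c d n); case: (inI c d n.+1).
Qed.

Lemma row_full_const (b1 b2 : bool) : (b2 -> b1) -> row_full (const_mx 1 : 'M[k]_(b1, b2)).
Proof.
case: b2 => [h|_]; last by rewrite /row_full eqn_leq rank_leq_col.
rewrite h //= /row_full; apply/eqP.
have -> : (const_mx 1 : 'M[k]_(1,1)) = 1%:M by apply/matrixP => p q; rewrite !ord1 !mxE.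
exact: mxrank1.
Qed.

Lemma row_free_const (b1 b2 : bool) : (b1 -> b2) -> row_free (const_mx 1 : 'M[k]_(b1, b2)).
Proof.
case: b1 => [h|_]; last by rewrite /row_free eqn_leq rank_leq_row.
rewrite h //= /row_free; apply/eqP.
have -> : (const_mx 1 : 'M[k]_(1,1)) = 1%:M by apply/matrixP => p q; rewrite !ord1 !mxE.
exact: mxrank1.
Qed.

Lemma G_heq a b c d (f g : homfam (I a b) (I c d)) n :
  heq f g -> G f n = G g n.
Proof. by move=> h; rewrite /G h. Qed.

Lemma proj_end M a c : (a <= c < t)%N -> projective_rep M -> is_iso M (I a c) -> c = t'.
Proof.
move=> /andP[hac hct] pM [phi [psi [hphi hpsi pp qq]]].
apply/eqP; rewrite eqn_leq -ltnS hct /=; rewrite leqNgt; apply/negP => hc.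
have hg : is_hom (cI a c.+1 a c) by apply: cI_hom => n _; rewrite /inI; lia.
have eg : is_epi (cI a c.+1 a c).
  by split=> // i; apply: row_full_const; rewrite /inI; lia.
case: (pM _ _ _ phi eg hphi) => h [hh hhg].
pose h' := hcomp psi h.
have hh' : is_hom h' by exact: hom_comp.
have e1 : heq (hcomp h' (cI a c.+1 a c)) (hid (I a c)).
  move=> i; rewrite hcompA /hcomp.
  by have := hhg i; rewrite /hcomp => ->; apply: qq.
have E1 : inI a c.+1 c by rewrite /inI; lia.
have E2 : inI a c c by rewrite /inI; lia.
have E3 : inI a c c.+1 = false by rewrite /inI; lia.
have E4 : inI a c.+1 c.+1 by rewrite /inI; lia.
have := G_heq c e1; rewrite G_comp ?G_id ?G_cI // E1 E2 /= mulr1.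
have := (homI h').1 hh' c hc; rewrite E2 E3 E1 E4 /= => <-.
by move/eqP; rewrite eq_sym oner_eq0.
Qed.

Lemma inj_start M a c : (a <= c < t)%N -> injective_rep M -> is_iso M (I a c) -> a = 0%N.
Proof.
move=> /andP[hac hct] iM [phi [psi [hphi hpsi pp qq]]].
apply/eqP; rewrite -leqn0 leqNgt; apply/negP => ha.
have hg : is_hom (cI a c a.-1 c) by apply: cI_hom => n _; rewrite /inI; lia.
have mg : is_mono (cI a c a.-1 c).
  by split=> // i; apply: row_free_const; rewrite /inI; lia.
case: (iM _ _ _ psi mg hpsi) => h [hh hhg].
pose h' := hcomp h phi.
have hh' : is_hom h' by exact: hom_comp.
have e1 : heq (hcomp (cI a c a.-1 c) h') (hid (I a c)).
  move=> i; rewrite -hcompA /hcomp.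
  by have := hhg i; rewrite /hcomp => ->; apply: qq.
have hat : (a < t)%N by apply: leq_ltn_trans hct.
have E1 : inI a c a by rewrite /inI; lia.
have E2 : inI a.-1 c a by rewrite /inI; lia.
have E3 : inI a c a.-1 = false by rewrite /inI; lia.
have E4 : inI a.-1 c a.-1 by rewrite /inI; lia.
have := G_heq a e1; rewrite G_comp ?G_id ?G_cI // E1 E2 /= mul1r.
have := (homI h').1 hh' a.-1; rewrite prednK // => /(_ hat).
rewrite E3 E4 E2 /= => ->.
by move/eqP; rewrite eq_sym oner_eq0.
Qed.

End IntA.


Section Steps.
Variables (k : fieldType) (t' : nat).
Local Notation t := t'.+1.
Local Notation I := (Irep k t').

Section HomFacts.
Variables (a b c d : nat) (g : homfam (I a b) (I c d)).
Hypothesis hg : is_hom g.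

Lemma Gstep n : (n.+1 < t)%N -> inI a b n -> inI a b n.+1 -> inI c d n -> inI c d n.+1 ->
  G g n.+1 = G g n.
Proof. by move=> hn h1 h2 h3 h4; have := (homI g).1 hg n hn; rewrite h1 h2 h3 h4. Qed.

Lemma Gsrcstop n : (n.+1 < t)%N -> ~~ inI a b n.+1 -> inI c d n -> inI c d n.+1 -> G g n = 0.
Proof.
move=> hn h2 h3 h4; have := (homI g).1 hg n hn; rewrite (negbTE h2) h3 h4 andbF /= => ->.
by [].
Qed.

Lemma Gtgtstart n : (n.+1 < t)%N -> inI a b n -> inI a b n.+1 -> ~~ inI c d n -> G g n.+1 = 0.
Proof. by move=> hn h1 h2 h3; have := (homI g).1 hg n hn; rewrite h1 h2 (negbTE h3). Qed.

Lemma Gfwd lo hi : (hi < t)%N ->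
  (forall n, (lo <= n < hi)%N -> inI a b n && inI a b n.+1 && inI c d n && inI c d n.+1) ->
  forall n, (lo <= n <= hi)%N -> G g n = G g lo.
Proof.
move=> hit hin; elim=> [|n IH] /andP[h1 h2]; first by have -> : lo = 0%N by lia.
case: (ltngtP lo n.+1) h1 => // [hlt _|-> //].
have /andP[/andP[/andP[e1 e2] e3] e4] := hin n (ltac:(lia)).
rewrite Gstep //; last by lia.
by apply: IH; lia.
Qed.

Lemma Gbwd lo hi : (hi < t)%N ->
  (forall n, (lo <= n < hi)%N -> inI a b n && inI a b n.+1 && inI c d n && inI c d n.+1) ->
  forall n, (lo <= n <= hi)%N -> G g n = G g hi.
Proof.
move=> hit hin n hn; rewrite (Gfwd hit hin hn) (Gfwd hit hin (n:=hi)) //.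
by lia.
Qed.

End HomFacts.

Lemma G0' a b c d (g : homfam (I a b) (I c d)) n : (n < t)%N ->
  G g n != 0 -> inI a b n /\ inI c d n.
Proof.
move=> hn hz; case/boolP: (inI a b n && inI c d n) => [/andP[]//|h].
by move: hz; rewrite G0 ?eqxx.
Qed.

End Steps.


Section Back.
Variables (k : fieldType) (t' : nat).
Local Notation t := t'.+1.
Local Notation I := (Irep k t').
Local Notation cI := (@cI k t').

Lemma G_scale a b c d (e : k) n : (n < t)%N ->
  G ((fun i => e *: const_mx 1) : homfam (I a b) (I c d)) n = if inI a b n && inI c d n then e else 0.
Proof. by move=> h; rewrite /G scZ sc_const /= inordK //; case: ifP; rewrite ?mulr1 ?mulr0. Qed.

Lemma sandw1 m i z (G : 'M[k]_(i,z)) (R : 'M[k]_(z,m)) (P1 : 'M[k]_(m,i)) (P2 : 'M[k]_(i,m)) :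
  P2 *m P1 = 1%:M -> P1 *m G *m R = 1%:M -> G *m (R *m P1) = 1%:M.
Proof.
move=> h1 h2; transitivity (P2 *m ((P1 *m G *m R) *m P1)); last by rewrite h2 mul1mx.
by rewrite !mulmxA h1 mul1mx.
Qed.

Lemma sandw2 m i z (Q2 : 'M[k]_(i,m)) (S : 'M[k]_(m,z)) (Io : 'M[k]_(z,i)) (Q1 : 'M[k]_(m,i)) :
  Q2 *m Q1 = 1%:M -> S *m (Io *m Q2) = 1%:M -> Q2 *m S *m Io = 1%:M.
Proof.
move=> h1 h2; transitivity (Q2 *m (S *m (Io *m Q2)) *m Q1); last by rewrite h2 mulmx1.
by rewrite -!mulmxA h1 mulmx1.
Qed.

Lemma back_step M M' (f : homfam M M') x y a :
  irreducible_map f -> (x <= y < t)%N -> is_iso M (I x y) -> (a < t')%N -> is_iso M' (I a t') ->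
  x = a.+1 /\ y = t'.
Proof.
case=> hf nsm nse fact /andP[hxy hyt] [p1 [p2 [hp1 hp2 Hp1 Hp2]]] hat [q1 [q2 [hq1 hq2 Hq1 Hq2]]].
have pp1 i : p1 i *m p2 i = 1%:M := Hp1 i.
have pp2 i : p2 i *m p1 i = 1%:M := Hp2 i.
have qq1 i : q1 i *m q2 i = 1%:M := Hq1 i.
have qq2 i : q2 i *m q1 i = 1%:M := Hq2 i.
pose g := hcomp p2 (hcomp f q1).
have hg : is_hom g by apply: hom_comp => //; apply: hom_comp.
have hat' : (a < t)%N by lia.
have Eg i : p2 i *m f i = g i *m q2 i.
  by rewrite /g /hcomp -!mulmxA (qq1 i) mulmx1.
case: (eqVneq (G g a) 0) => ga; last first.
  exfalso; apply: nse.
  have [hxa _] := G0' hat' ga.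
  have hx : x = a.
    apply/eqP; rewrite eqn_leq; move: (hxa); rewrite /inI => /andP[-> hay] /=.
    rewrite leqNgt; apply/negP => hlt.
    have := @Gtgtstart _ _ _ _ _ _ g hg a.-1; rewrite prednK; last by lia.
    move=> /(_ hat'); rewrite !/inI; move=> /(_ ltac:(lia) ltac:(lia) ltac:(lia)) => hz.
    by move: ga; rewrite hz eqxx.
  subst x.
  have hgc n : (a <= n <= y)%N -> G g n = G g a.
    apply: (Gfwd hg (hi:=y)) => // m hm; rewrite /inI; lia.
  have hy : y = t'.
    apply/eqP; rewrite eqn_leq -ltnS hyt /= leqNgt; apply/negP => hlt.
    have := @Gsrcstop _ _ _ _ _ _ g hg y hlt; rewrite /inI.
    move=> /(_ ltac:(lia) ltac:(lia) ltac:(lia)) => hz.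
    by move: ga; rewrite -(hgc y) ?hz ?eqxx //; lia.
  subst y.
  pose cc := G g a.
  pose sg : homfam (I a t') (I a t') := fun i => cc^-1 *: const_mx 1.
  have hsg : is_hom sg.
    apply/homI => n hn; rewrite /sg !G_scale //; last by lia.
    by case: (inI a t' n); case: (inI a t' n.+1).
  have esg i : sg i *m g i = 1%:M.
    have := @G_inj _ _ _ _ _ _ (hcomp sg g) (hid _) _ i; rewrite /hcomp /hid; apply => n hn.
    rewrite G_comp // G_id // /sg G_scale //.
    case hn': (inI a t' n) => //=.
    by rewrite hgc ?mulVf //; move: hn'; rewrite /inI; lia.
  exists (hcomp q1 (hcomp sg p2)); split; first by apply: hom_comp => //; apply: hom_comp.
  move=> i; rewrite /hcomp /hid -!mulmxA Eg (mulmxA (sg i)) esg mul1mx.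
  exact: qq1.
pose g' := hcomp g (cI a t' a.+1 t').
have Gg' n : (n < t)%N -> G g' n = if (a < n)%N then G g n else 0.
  move=> hn; rewrite /g' G_comp // G_cI //.
  case: (ltnP a n) => h.
    have -> : inI a t' n by rewrite /inI; lia.
    have -> : inI a.+1 t' n by rewrite /inI; lia.
    by rewrite mulr1.
  have -> : inI a.+1 t' n = false by rewrite /inI; lia.
  by rewrite andbF mulr0 if_same.
have hg' : is_hom g'.
  apply/homI => n hn; rewrite !Gg' //; last by lia.
  have := (homI g).1 hg n hn.
  case: (ltngtP a n) => h.
  - have -> : (a < n.+1)%N by lia.
    have -> : inI a t' n = inI a.+1 t' n by rewrite /inI; lia.
    have -> : inI a t' n.+1 = inI a.+1 t' n.+1 by rewrite /inI; lia.
    by [].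
  - have -> : (a < n.+1)%N = false by lia.
    have -> : inI a.+1 t' n = false by rewrite /inI; lia.
    by rewrite !if_same.
  - subst n; rewrite ltnSn ga if_same.
    have -> : inI a.+1 t' a = false by rewrite /inI; lia.
    by [].
have hi : is_hom (cI a.+1 t' a t') by apply: cI_hom => n _; rewrite /inI; lia.
have gi i : g' i *m cI a.+1 t' a t' i = g i.
  have := @G_inj _ _ _ _ _ _ (hcomp g' (cI a.+1 t' a t')) g; rewrite /hcomp; apply => n hn.
  rewrite G_comp // Gg' // G_cI //.
  case: (ltngtP a n) => h.
  - have -> : inI a.+1 t' n by rewrite /inI; lia.
    have -> : inI a t' n by rewrite /inI; lia.
    by rewrite /= mulr1.
  - have -> : inI a.+1 t' n = false by rewrite /inI; lia.
    by rewrite G0 //; apply/negP => /andP[_]; rewrite /inI; lia.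
  - subst n; have -> : inI a.+1 t' a = false by rewrite /inI; lia.
    by rewrite ga.
have := fact _ (hcomp p1 g') (hcomp (cI a.+1 t' a t') q2)
  (hom_comp hp1 hg') (hom_comp hi hq2).
case.
- move=> i; rewrite /hcomp -mulmxA (mulmxA (g' i)) gi /g /hcomp !mulmxA (pp1 i) mul1mx.
  by rewrite -mulmxA (qq1 i) mulmx1.
- case=> r [hr rr].
  pose r' := hcomp r p1.
  have er i : g' i *m r' i = 1%:M.
    by apply: sandw1 (pp2 i) (rr i).
  have hr' : is_hom r' by apply: hom_comp.
  have hxt : (x < t)%N by lia.
  have := G_heq x (fun i => er i : hcomp g' r' i = hid _ i).
  rewrite G_comp // G_id //.
  have -> : inI x y x by rewrite /inI; lia.
  case hZx: (inI a.+1 t' x); last by move/eqP; rewrite eq_sym oner_eq0.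
  move=> Ex1.
  have g'x : G g' x != 0 by apply/eqP => h; move: Ex1; rewrite h mul0r => /eqP; rewrite eq_sym oner_eq0.
  have r'x : G r' x != 0 by apply/eqP => h; move: Ex1; rewrite h mulr0 => /eqP; rewrite eq_sym oner_eq0.
  have hgc n : (x <= n <= y)%N -> G g' n = G g' x.
    apply: (Gfwd hg' (hi:=y)) => // m hm; move: hZx; rewrite /inI; lia.
  split.
    apply/eqP; rewrite eqn_leq; move: hZx; rewrite /inI => /andP[-> _]; rewrite andbT.
    rewrite leqNgt; apply/negP => hlt.
    have := @Gtgtstart _ _ _ _ _ _ r' hr' x.-1; rewrite prednK; last by lia.
    move=> /(_ hxt); rewrite !/inI; move=> /(_ ltac:(lia) ltac:(lia) ltac:(lia)) => hz.
    by move: r'x; rewrite hz eqxx.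
  apply/eqP; rewrite eqn_leq -ltnS hyt /= leqNgt; apply/negP => hlt.
  have := @Gsrcstop _ _ _ _ _ _ g' hg' y hlt; move: hZx; rewrite /inI => hZx.
  move=> /(_ ltac:(lia) ltac:(lia) ltac:(lia)) => hz.
  by move: g'x; rewrite -(hgc y) ?hz ?eqxx //; lia.
- case=> s [hs ss]; exfalso.
  pose s' := hcomp q2 s.
  have es i : s' i *m cI a.+1 t' a t' i = 1%:M.
    by apply: sandw2 (qq2 i) (ss i).
  have := G_heq a (fun i => es i : hcomp s' (cI a.+1 t' a t') i = hid _ i).
  rewrite G_comp // G_id //.
  have -> : inI a.+1 t' a = false by rewrite /inI; lia.
  have -> : inI a t' a by rewrite /inI; lia.
  by move/eqP; rewrite eq_sym oner_eq0.
Qed.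

End Back.


Section Fwd.
Variables (k : fieldType) (t' : nat).
Local Notation t := t'.+1.
Local Notation I := (Irep k t').
Local Notation cI := (@cI k t').

Lemma fwd_step M M' (f : homfam M M') b x y :
  irreducible_map f -> (0 < b < t)%N -> is_iso M (I 0 b) -> (x <= y < t)%N -> is_iso M' (I x y) ->
  x = 0%N /\ y = b.-1.
Proof.
case=> hf nsm nse fact /andP[hb0 hbt] [p1 [p2 [hp1 hp2 Hp1 Hp2]]] /andP[hxy hyt] [q1 [q2 [hq1 hq2 Hq1 Hq2]]].
have pp1 i : p1 i *m p2 i = 1%:M := Hp1 i.
have pp2 i : p2 i *m p1 i = 1%:M := Hp2 i.
have qq1 i : q1 i *m q2 i = 1%:M := Hq1 i.
have qq2 i : q2 i *m q1 i = 1%:M := Hq2 i.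
pose g := hcomp p2 (hcomp f q1).
have hg : is_hom g by apply: hom_comp => //; apply: hom_comp.
have Eg i : f i *m q1 i = p1 i *m g i.
  by rewrite /g /hcomp !mulmxA (pp1 i) mul1mx.
case: (eqVneq (G g b) 0) => gb; last first.
  exfalso; apply: nsm.
  have [_ hyb] := G0' hbt gb.
  have hy : y = b.
    apply/eqP; rewrite eqn_leq; move: (hyb); rewrite /inI => /andP[hxb ->]; rewrite andbT.
    rewrite leqNgt; apply/negP => hlt.
    have := @Gsrcstop _ _ _ _ _ _ g hg b; rewrite /inI.
    move=> /(_ ltac:(lia) ltac:(lia) ltac:(lia) ltac:(lia)) => hz.
    by move: gb; rewrite hz eqxx.
  subst y.
  have hgc n : (x <= n <= b)%N -> G g n = G g b.
    apply: (Gbwd hg (hi:=b)) => // m hm; rewrite /inI; lia.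
  have hx : x = 0%N.
    apply/eqP; rewrite -leqn0 leqNgt; apply/negP => hlt.
    have := @Gtgtstart _ _ _ _ _ _ g hg x.-1; rewrite prednK; last by lia.
    move=> /(_ ltac:(lia)); rewrite !/inI; move=> /(_ ltac:(lia) ltac:(lia) ltac:(lia)) => hz.
    by move: gb; rewrite -(hgc x) ?hz ?eqxx //; lia.
  subst x.
  pose cc := G g b.
  pose sg : homfam (I 0 b) (I 0 b) := fun i => cc^-1 *: const_mx 1.
  have hsg : is_hom sg.
    apply/homI => n hn; rewrite /sg !G_scale //; last by lia.
    by case: (inI 0 b n); case: (inI 0 b n.+1).
  have esg i : g i *m sg i = 1%:M.
    have := @G_inj _ _ _ _ _ _ (hcomp g sg) (hid _) _ i; rewrite /hcomp /hid; apply => n hn.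
    rewrite G_comp // G_id // /sg G_scale //.
    case hn': (inI 0 b n) => //=.
    by rewrite hgc ?mulfV //; move: hn'; rewrite /inI; lia.
  exists (hcomp q1 (hcomp sg p2)); split; first by apply: hom_comp => //; apply: hom_comp.
  move=> i; rewrite /hcomp /hid mulmxA Eg -mulmxA (mulmxA (g i)) esg mul1mx.
  exact: pp1.
pose g' := hcomp (cI 0 b.-1 0 b) g.
have Gg' n : (n < t)%N -> G g' n = if (n < b)%N then G g n else 0.
  move=> hn; rewrite /g' G_comp // G_cI //.
  case: (ltnP n b) => h.
    have -> : inI 0 b n by rewrite /inI; lia.
    have -> : inI 0 b.-1 n by rewrite /inI; lia.
    by rewrite mul1r.
  have -> : inI 0 b.-1 n = false by rewrite /inI; lia.
  by rewrite /= mul0r if_same.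
have hg' : is_hom g'.
  apply/homI => n hn; rewrite !Gg' //; last by lia.
  have := (homI g).1 hg n hn.
  case: (ltngtP n.+1 b) => h.
  - have -> : inI 0 b n = inI 0 b.-1 n by rewrite /inI; lia.
    have -> : inI 0 b n.+1 = inI 0 b.-1 n.+1 by rewrite /inI; lia.
    by [].
  - have -> : inI 0 b.-1 n.+1 = false by rewrite /inI; lia.
    by rewrite !if_same.
  - rewrite h gb if_same => <-.
    have -> : inI 0 b.-1 b = false by rewrite /inI; lia.
    by rewrite andbF.
have hpi : is_hom (cI 0 b 0 b.-1) by apply: cI_hom => n _; rewrite /inI; lia.
have pg i : cI 0 b 0 b.-1 i *m g' i = g i.
  have := @G_inj _ _ _ _ _ _ (hcomp (cI 0 b 0 b.-1) g') g; rewrite /hcomp; apply => n hn.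
  rewrite G_comp // Gg' // G_cI //.
  case: (ltngtP n b) => h.
  - have -> : inI 0 b.-1 n by rewrite /inI; lia.
    have -> : inI 0 b n by rewrite /inI; lia.
    by rewrite /= mul1r.
  - have -> : inI 0 b.-1 n = false by rewrite /inI; lia.
    by rewrite G0 //; apply/negP => /andP[]; rewrite /inI; lia.
  - subst n; have -> : inI 0 b.-1 b = false by rewrite /inI; lia.
    by rewrite gb.
have := fact _ (hcomp p1 (cI 0 b 0 b.-1)) (hcomp g' q2)
  (hom_comp hp1 hpi) (hom_comp hg' hq2).
case.
- move=> i; rewrite /hcomp -mulmxA (mulmxA (cI 0 b 0 b.-1 i)) pg /g /hcomp !mulmxA (pp1 i) mul1mx.
  by rewrite -mulmxA (qq1 i) mulmx1.
- case=> r [hr rr]; exfalso.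
  pose r' := hcomp r p1.
  have er i : cI 0 b 0 b.-1 i *m r' i = 1%:M by apply: sandw1 (pp2 i) (rr i).
  have := G_heq b (fun i => er i : hcomp (cI 0 b 0 b.-1) r' i = hid _ i).
  rewrite G_comp // G_id //.
  have -> : inI 0 b.-1 b = false by rewrite /inI; lia.
  have -> : inI 0 b b by rewrite /inI; lia.
  by move/eqP; rewrite eq_sym oner_eq0.
- case=> s [hs ss].
  pose s' := hcomp q2 s.
  have es i : s' i *m g' i = 1%:M by apply: sandw2 (qq2 i) (ss i).
  have hs' : is_hom s' by apply: hom_comp.
  have := G_heq y (fun i => es i : hcomp s' g' i = hid _ i).
  rewrite G_comp // G_id //.
  have -> : inI x y y by rewrite /inI; lia.
  case hZy: (inI 0 b.-1 y); last by move/eqP; rewrite eq_sym oner_eq0.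
  move=> Ey1.
  have g'y : G g' y != 0 by apply/eqP => h; move: Ey1; rewrite h mulr0 => /eqP; rewrite eq_sym oner_eq0.
  have s'y : G s' y != 0 by apply/eqP => h; move: Ey1; rewrite h mul0r => /eqP; rewrite eq_sym oner_eq0.
  have hgc n : (x <= n <= y)%N -> G g' n = G g' y.
    apply: (Gbwd hg' (hi:=y)) => // m hm; move: hZy; rewrite /inI; lia.
  split.
    apply/eqP; rewrite -leqn0 leqNgt; apply/negP => hlt.
    have := @Gtgtstart _ _ _ _ _ _ g' hg' x.-1; rewrite prednK; last by lia.
    move=> /(_ ltac:(lia)); move: hZy; rewrite !/inI => hZy.
    move=> /(_ ltac:(lia) ltac:(lia) ltac:(lia)) => hz.
    by move: g'y; rewrite -(hgc x) ?hz ?eqxx //; lia.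
  apply/eqP; rewrite eqn_leq; move: (hZy); rewrite /inI => /andP[_ ->] /=.
  rewrite leqNgt; apply/negP => hlt.
  have := @Gsrcstop _ _ _ _ _ _ s' hs' y; rewrite /inI.
  move=> /(_ ltac:(lia) ltac:(lia) ltac:(lia) ltac:(lia)) => hz.
  by move: s'y; rewrite hz eqxx.
Qed.

End Fwd.


Section Ext.
Variables (k : fieldType) (t : nat).

Definition cobound (X Y : rep k t)
  (D : forall e : arr t, 'M[k]_(rdim X (asrc e), rdim Y (atgt e))) :=
  exists h : homfam X Y, forall e, D e = rmap X e *m h (atgt e) - h (asrc e) *m rmap Y e.

Lemma ext_cob (T : rep k t) : ext1_vanishes T T -> forall D, @cobound T T D.
Proof.
move=> hE D.
pose E := @Rep k t (fun i => (rdim T i + rdim T i)%N)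
  (fun e => block_mx (rmap T e) 0 (D e) (rmap T e)).
pose f : homfam T E := fun i => row_mx 1%:M 0.
pose g : homfam E T := fun i => col_mx 0 1%:M.
have hf : is_mono f.
  split.
    move=> e; rewrite /f /= mul_mx_row mulmx1 mulmx0 mul_row_block.
    by rewrite !mul1mx !mul0mx !addr0.
  move=> i; apply/row_freeP; exists (col_mx 1%:M 0).
  by rewrite /f mul_row_col mulmx1 mulmx0 addr0.
have hg : is_epi g.
  split.
    move=> e; rewrite /g /= mul_block_col mul_col_mx !mulmx0 !mulmx1 mul0mx mul1mx.
    by rewrite !addr0 add0r.
  move=> i; apply/row_fullP; exists (row_mx 0 1%:M).
  by rewrite /g mul_row_col mulmx1 mulmx0 add0r.
have hfg : forall i, f i *m g i = 0 /\ (kermx (g i) <= f i)%MS.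
  move=> i; split; first by rewrite /f /g mul_row_col mulmx0 mul0mx addr0.
  apply/submxP; exists (lsubmx (kermx (g i))).
  have K := mulmx_ker (g i).
  rewrite -{1}(hsubmxK (kermx (g i))) in K.
  move: K; rewrite /g mul_row_col mulmx0 mulmx1 add0r => K.
  rewrite -{1}(hsubmxK (kermx (g i))) K /f mul_mx_row mulmx1 mulmx0 //.
case: (hE E f g hf hg hfg) => s [hs sg].
exists (fun i => lsubmx (s i)).
have sE i : s i = row_mx (lsubmx (s i)) 1%:M.
  have := sg i; rewrite /hcomp /hid -{1}(hsubmxK (s i)) /g mul_row_col mulmx0 mulmx1 add0r.
  by move=> <-; rewrite hsubmxK.
move=> e; have := hs e.
rewrite (sE (atgt e)) (sE (asrc e)) /= mul_mx_row mul_row_block.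
by move=> /eq_row_mx[HE _]; rewrite !row_mxKl HE mul1mx addrAC subrr add0r.
Qed.

Lemma cob_transport (T X Y : rep k t) (sX : homfam X T) (rX : homfam T X) (sY : homfam Y T) (rY : homfam T Y) :
  is_hom sX -> is_hom rX -> heq (hcomp sX rX) (hid X) ->
  is_hom sY -> is_hom rY -> heq (hcomp sY rY) (hid Y) ->
  (forall D, @cobound T T D) ->
  forall d, @cobound X Y d.
Proof.
move=> hsX hrX eX hsY hrY eY hT d.
case: (hT (fun e => rX (asrc e) *m d e *m sY (atgt e))) => h hh.
exists (fun i => sX i *m h i *m rY i) => e.
have eX' := eX (asrc e); have eY' := eY (atgt e); rewrite /hcomp /hid in eX' eY'.
transitivity (sX (asrc e) *m (rmap T e *m h (atgt e) - h (asrc e) *m rmap T e) *m rY (atgt e)).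
  by rewrite -hh !mulmxA eX' mul1mx -mulmxA eY' mulmx1.
rewrite mulmxBr mulmxBl; congr (_ - _).
  by rewrite !mulmxA hsX.
by rewrite -!mulmxA hrY.
Qed.

End Ext.


Section Cross.
Variables (k : fieldType) (t' : nat).
Local Notation t := t'.+1.
Local Notation I := (Irep k t').

Lemma cross_noncob a b c d : (a < c)%N -> (c <= b.+1)%N -> (b.+1 <= d)%N -> (d < t)%N ->
  ~ (forall D, @cobound k t (I a b) (I c d) D).
Proof.
move=> hac hcb hbd hdt hall.
pose D : forall e : arr t, 'M[k]_(rdim (I a b) (asrc e), rdim (I c d) (atgt e)) :=
  fun e => const_mx (if (asrc e : nat) == c.-1 then 1 else 0).
case: (hall D) => h hh.
have key n : (n.+1 < t)%N ->
  (if inI a b n && inI c d n.+1 then (if n == c.-1 then 1 else 0) else 0) =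
  (if inI a b n && inI a b n.+1 then G h n.+1 else 0) -
  (if inI c d n && inI c d n.+1 then G h n else 0).
  move=> hn; pose i : 'I_t := inord n.
  have Hi : (nxt i : nat) == i.+1 by rewrite nxtE ?inordK // ltnW.
  have := congr1 (@sc _ _ _) (hh (exist _ (i, nxt i) Hi)).
  rewrite /D /asrc /atgt /=.
  rewrite scB !sc_mulb !sc_const /i nxt_inord // -/(G h n) -/(G h n.+1) /= !inordK ?(ltnW hn) //.
  case: (inI a b n); case: (inI a b n.+1); case: (inI c d n); case: (inI c d n.+1);
    by rewrite /= ?mul1r ?mulr1 ?mul0r ?mulr0.
have hc0 : (0 < c)%N by lia.
have k1 := key c.-1 ltac:(lia); rewrite prednK // eqxx in k1.
have E0 : inI a b c.-1 by rewrite /inI; lia.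
have E1 : inI c d c by rewrite /inI; lia.
have E2 : inI c d c.-1 = false by rewrite /inI; lia.
rewrite E0 E1 E2 /= subr0 in k1.
case: (ltngtP c b.+1) hcb => // hcb' _; last first.
  have E : inI a b c = false by rewrite /inI; lia.
  by move: k1; rewrite E => /eqP; rewrite oner_eq0.
have E3 : inI a b c by rewrite /inI; lia.
move: k1; rewrite E3 /= => k1.
have hprop0 m : (c + m <= b)%N -> G h (c + m) = 1.
  elim: m => [|m IH] hm; first by rewrite addn0 -k1.
  have := key (c + m) ltac:(lia).
  have -> : (c + m == c.-1) = false by apply/eqP; lia.
  have -> : inI a b (c + m) && inI a b (c + m).+1 by rewrite /inI; lia.
  have -> : inI c d (c + m) && inI c d (c + m).+1 by rewrite /inI; lia.
  rewrite if_same IH; last by lia.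
  by rewrite addnS; move/eqP; rewrite eq_sym subr_eq0 => /eqP.
have hprop n : (c <= n <= b)%N -> G h n = 1.
  by move=> hn; have := hprop0 (n - c)%N ltac:(lia); rewrite subnKC //; lia.
have := key b ltac:(lia).
have -> : (b == c.-1) = false by apply/eqP; lia.
have -> : inI a b b.+1 = false by rewrite /inI; lia.
have -> : inI c d b && inI c d b.+1 by rewrite /inI; lia.
rewrite if_same andbF hprop; last by lia.
by rewrite sub0r => /eqP; rewrite eq_sym oppr_eq0 oner_eq0.
Qed.

End Cross.

Local Close Scope ring_scope.


Theorem lemma6p3 (k : fieldType) (t s : nat)
  (M : nat -> rep k t) (f : forall j : nat, homfam (M j) (M j.+1)) :
  (0 < s)%N -> (s < t)%N ->
  (forall j, (j <= t)%N -> indecomposable (M j)) ->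
  projective_rep (M s) -> injective_rep (M s) ->
  (forall j, (j < t)%N -> irreducible_map (f j)) ->
  forall T : rep k t, tilting T ->
  exists j, [/\ (j <= t)%N, j != s & is_summand (M j) T].
Proof.
case: t M f => [|t'] M f hs0 hst; first by [].
move=> indM projM injM irr T [extT [X [sT [rT [[indX niso homs] [sr orth sum]]]]]].
pose I := Irep k t'.
have Ms : is_iso (M s) (I 0%N t').
  have [a [c [hac iso]]] := classify (indM s (ltnW hst)).
  have iso' := iso_sym iso.
  have ec := proj_end hac projM iso'.
  have ea := inj_start hac injM iso'.
  by subst c; subst a.
have back m : (m <= s)%N -> is_iso (M (s - m)) (I m t').
  elim: m => [|m IH] hm; first by rewrite subn0.
  have hj : ((s - m.+1).+1 = s - m)%N by lia.
  have [x [y [hxy iso]]] := classify (indM (s - m.+1)%N ltac:(lia)).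
  have iso' := iso_sym iso.
  have IH' : is_iso (M (s - m.+1).+1) (I m t') by rewrite hj; apply: IH; lia.
  have [ex ey] := @back_step _ _ _ _ _ x y m (irr (s - m.+1)%N ltac:(lia)) hxy iso' ltac:(lia) IH'.
  by subst x; subst y.
have fwd m : (m <= t'.+1 - s)%N -> is_iso (M (s + m)) (I 0%N (t' - m)).
  elim: m => [|m IH] hm; first by rewrite addn0 subn0.
  have [x [y [hxy iso]]] := classify (indM (s + m).+1 ltac:(lia)).
  have iso' := iso_sym iso.
  have IH' : is_iso (M (s + m)) (I 0%N (t' - m)) by apply: IH; lia.
  have [ex ey] := @fwd_step _ _ _ _ _ (t' - m)%N x y (irr (s + m)%N ltac:(lia)) ltac:(lia) IH' hxy iso'.
  rewrite addnS; subst x y.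
  have E : Nat.pred (t' - m) = (t' - m.+1)%N by rewrite -subnS.
  by rewrite -E.
have ex_int j : exists p : nat * nat, (p.1 <= p.2 < t'.+1)%N /\ is_iso (I p.1 p.2) (X j).
  by have [a [c [h1 h2]]] := classify (indX j); exists (a, c).
have [F0 hF0] := fin_all_exists ex_int.
have sumX j : is_summand (X j) T.
  by exists (sT j), (rT j); split; [exact: (homs j).1 | exact: (homs j).2 | exact: sr].
have sumI j : is_summand (I (F0 j).1 (F0 j).2) T.
  exact: iso_summand (hF0 j).2 (sumX j).
apply: NNPP => nochain.
have nch j : ~ (((F0 j).2 = t') /\ (1 <= (F0 j).1 <= s)%N) /\
             ~ (((F0 j).1 = 0%N) /\ (s.-1 <= (F0 j).2 <= t'.-1)%N).
  split.
  - case=> hc ha; apply: nochain; exists (s - (F0 j).1)%N; split; first by lia.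
      by apply/eqP; lia.
    apply: iso_summand (sumI j).
    have := back (F0 j).1 ltac:(lia); rewrite hc; exact.
  - case=> ha hc; apply: nochain; exists (s + (t' - (F0 j).2))%N; split; first by lia.
      by apply/eqP; lia.
    apply: iso_summand (sumI j).
    have := fwd (t' - (F0 j).2)%N ltac:(lia).
    have -> : (t' - (t' - (F0 j).2))%N = (F0 j).2 by lia.
    by rewrite ha.
have cobT := ext_cob extT.
have ncSS p q : ~ [/\ ((F0 p).1 < (F0 q).1)%N, ((F0 q).1 <= (F0 p).2.+1)%N & ((F0 p).2.+1 <= (F0 q).2)%N].
  case=> h1 h2 h3.
  have [sp [rp [hsp hrp ep]]] := sumI p.
  have [sq [rq [hsq hrq eq]]] := sumI q.
  have := cob_transport hsp hrp ep hsq hrq eq cobT.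
  apply: (cross_noncob h1 h2 h3).
  by have := (hF0 q).1; lia.
pose Pu m := (1 <= m <= t'.+1)%N && ((m == 1%N) || [exists p, F0 p == (0%N, (m - 2)%N)]).
have exPu : exists m, Pu m by exists 1%N.
have ubPu : forall m, Pu m -> (m <= t'.+1)%N by move=> m /andP[/andP[]].
case: (ex_maxnP exPu ubPu) => u Puu umax.
have Pu_cases : u = 1%N \/ exists q, F0 q = (0%N, (u - 2)%N).
  move: Puu => /andP[_ /orP[/eqP -> | /existsP[q /eqP Fq]]]; [by left | by right; exists q].
have hu1 : (1 <= u <= t'.+1)%N by move: Puu => /andP[].
have hus : (u <= s)%N.
  case: Pu_cases => [-> //|[q Fq]].
  have [_ n2] := nch q; rewrite Fq /= in n2.
  have := (hF0 q).1; rewrite Fq /= => hv.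
  case: (leqP u s) => // hlt; exfalso; apply: n2; split => //; lia.
pose F (o : option 'I_t'.+1) := if o is Some p then F0 p else (u, t').
apply: (@comb_false t'.+1 F).
- by case=> [p|] /=; [exact: (hF0 p).1 | lia].
- case=> [p|] [q|] //= E.
  + congr Some; case: (eqVneq p q) => // npq; exfalso; apply: (niso p q npq).
    apply: iso_trans (iso_sym (hF0 p).2) _; rewrite E; exact: (hF0 q).2.
  + by have [n1 _] := nch p; exfalso; apply: n1; rewrite E /=; split => //; lia.
  + by have [n1 _] := nch q; exfalso; apply: n1; rewrite -E /=; split => //; lia.
- case=> [p|] [q|] /=.
  + exact: ncSS.
  + case=> h1 h2 h3.
    case: (eqVneq (F0 p).1 0%N) => ha.
      have := umax ((F0 p).2 + 2)%N.
      have Pc : Pu ((F0 p).2 + 2)%N.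
        apply/andP; split; first by lia.
        apply/orP; right; apply/existsP; exists p.
        by rewrite addnK -ha -surjective_pairing.
      by move/(_ Pc); lia.
    case: Pu_cases => [hu|[q Fq]]; first by lia.
    apply: (ncSS q p); rewrite Fq /=; split; lia.
  + by case=> _ _; have := (hF0 q).1; lia.
  + by case; lia.
Qed.
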